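(* Let $X$ be a graph on vertex set $V$ with $|V|=n$, possibly with loops (but no multiple edges), with adjacency matrix $A$ and vertex degrees $d_1,\dots,d_n$ (each loop counted once in the degree). Let $T=\operatorname{diag}(t_1,\dots,t_n)$ be a real diagonal matrix such that $T+A$ is positive semidefinite. If $S\subseteq V$ is an independent set of size $s$ containing $s_1$ vertices that carry loops, then \[ \frac{s^2}{n^2}\sum_{i\in V}(t_i+d_i)\;-\;2\frac{s}{n}\sum_{i\in S}(t_i+d_i)\;+\;\sum_{i\in S}t_i\;\ge\;-s_1 . \]
   Context: The adjacency matrix $A$ has $A_{ij}=1$ if $i\ne j$ are adjacent and $0$ otherwise, and $A_{ii}=1$ if vertex $i$ carries a loop and $0$ otherwise. An independent set is a set of vertices no two distinct members of which are adjacent; vertices with loops are allowed in an independent set. *)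

(* Defs.v *)
From mathcomp Require Import all_boot all_order all_algebra.
Set Implicit Arguments. Unset Strict Implicit. Unset Printing Implicit Defensive.
Import Order.TTheory GRing.Theory Num.Theory.
Local Open Scope ring_scope.

(* A graph on vertex set 'I_n, possibly with loops, no multiple edges, is a
   symmetric relation e : rel 'I_n; e i i = true means vertex i carries a loop. *)
Definition symmetric_graph n (e : rel 'I_n) : Prop := forall i j, e i j = e j i.

Definition adjmx (R : nzRingType) n (e : rel 'I_n) : 'M[R]_n :=
  \matrix_(i, j) (e i j)%:R.

(* Degree; a loop contributes 1 (i is counted among its own neighbours). *)
Definition deg n (e : rel 'I_n) (i : 'I_n) : nat := #|[set j | e i j]|.

Definition psd (R : numDomainType) n (M : 'M[R]_n) : Prop :=
  forall x : 'cV[R]_n, 0 <= ((x^T *m M *m x) 0 0).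

Definition independent n (e : rel 'I_n) (S : {set 'I_n}) : Prop :=
  forall i j, i \in S -> j \in S -> i != j -> ~~ e i j.

(* Main.v *)
Require Import Defs.
From mathcomp Require Import all_boot all_order all_algebra.
From mathcomp Require Import ring lra.
Import Order.TTheory GRing.Theory Num.Theory.
Local Open Scope ring_scope.

Section H.
Variables (R : realFieldType) (n : nat) (e : rel 'I_n) (t : 'I_n -> R).
Hypothesis sym : symmetric_graph e.
Let M := diag_mx (\row_i t i) + adjmx R e.

Lemma ME i j : M i j = (i == j)%:R * t i + (e i j)%:R.
Proof. by rewrite /M /adjmx !mxE mulr_natl. Qed.

Lemma rowsum i : \sum_j M i j = t i + (deg e i)%:R.
Proof.
under eq_bigr do rewrite ME.
rewrite big_split /= (bigD1 i) //= eqxx mul1r big1 ?addr0; last first.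
  by move=> j /negbTE; rewrite eq_sym => ->; rewrite mul0r.
congr (_ + _); rewrite /deg -sum1_card natr_sum [RHS]big_mkcond /=.
by apply: eq_bigr => j _; rewrite inE; case: (e i j).
Qed.

Lemma colsum j : \sum_i M i j = t j + (deg e j)%:R.
Proof.
rewrite -rowsum; apply: eq_bigr => i _; rewrite !ME sym eq_sym.
by case: eqP => [->|]; rewrite ?mul0r ?mul1r.
Qed.

Lemma quad (x : 'cV[R]_n) :
  (x^T *m M *m x) 0 0 = \sum_i \sum_j x i 0 * M i j * x j 0.
Proof.
rewrite mxE exchange_big; apply: eq_bigr => j _.
by rewrite mxE big_distrl; apply: eq_bigr => i _; rewrite mxE.
Qed.
End H.

Theorem lemma2p1 (R : realFieldType) (n : nat) (e : rel 'I_n)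
  (t : 'I_n -> R) (S : {set 'I_n}) :
  symmetric_graph e ->
  psd (diag_mx (\row_i t i) + adjmx R e) ->
  independent e S ->
  let s : R := (#|S|)%:R in
  let s1 : R := (#|[set i in S | e i i]|)%:R in
  let N : R := n%:R in
  (s ^+ 2 / N ^+ 2) * (\sum_(i < n) (t i + (deg e i)%:R))
    - 2 * (s / N) * (\sum_(i in S) (t i + (deg e i)%:R))
    + \sum_(i in S) t i >= - s1.
Proof.
move=> sym psdM ind; cbv zeta; set s : R := (#|S|)%:R; set s1 : R := (#|[set i in S | e i i]|)%:R; set N : R := n%:R.
set M := diag_mx (\row_i t i) + adjmx R e.
set c := s / N.
pose a i : R := (i \in S)%:R.
have := psdM (\col_i (a i - c)); rewrite quad.
have E : \sum_i \sum_j (\col_i (a i - c)) i 0 * M i j * (\col_i (a i - c)) j 0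
  = (\sum_i \sum_j a i * a j * M i j) - c * (\sum_i \sum_j a i * M i j)
    - c * (\sum_i \sum_j a j * M i j) + c ^+ 2 * (\sum_i \sum_j M i j).
  rewrite !mulr_sumr -!sumrB -big_split /=; apply: eq_bigr => i _.
  rewrite !mulr_sumr -!sumrB -big_split /=; apply: eq_bigr => j _.
  rewrite !mxE; ring.
have P0 : \sum_i \sum_j M i j = \sum_(i < n) (t i + (deg e i)%:R).
  by apply: eq_bigr => i _; rewrite rowsum.
have P1 : \sum_i \sum_j a i * M i j = \sum_(i in S) (t i + (deg e i)%:R).
  rewrite [RHS]big_mkcond /=; apply: eq_bigr => i _.
  by rewrite -mulr_sumr rowsum /a; case: (i \in S); rewrite ?mul1r ?mul0r.
have P1' : \sum_i \sum_j a j * M i j = \sum_(i in S) (t i + (deg e i)%:R).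
  rewrite exchange_big [RHS]big_mkcond /=; apply: eq_bigr => j _.
  by rewrite -mulr_sumr colsum /a; case: (j \in S); rewrite ?mul1r ?mul0r.
have P2 : \sum_i \sum_j a i * a j * M i j = \sum_(i in S) t i + s1.
  have inner i : i \in S -> \sum_j a j * M i j = t i + (e i i)%:R.
    move=> iS; rewrite (bigD1 i) //= big1 ?addr0.
      by rewrite /a iS mul1r ME eqxx mul1r.
    move=> j ji; rewrite /a; case jS: (j \in S); last by rewrite mul0r.
    rewrite ME eq_sym (negbTE ji) mul0r add0r.
    have ij : i != j by rewrite eq_sym.
    by rewrite (negbTE (ind i j iS jS ij)) mulr0.
  have -> : \sum_i \sum_j a i * a j * M i j = \sum_(i in S) (t i + (e i i)%:R).
    rewrite [RHS]big_mkcond /=; apply: eq_bigr => i _.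
    under eq_bigr do rewrite -mulrA.
    rewrite -mulr_sumr /a; case iS: (i \in S); last by rewrite mul0r.
    by rewrite mul1r inner.
  rewrite big_split /=; congr (_ + _).
  rewrite /s1 -sum1_card natr_sum [LHS]big_mkcond [RHS]big_mkcond /=.
  by apply: eq_bigr => i _; rewrite inE; case: (i \in S); case: (e i i).
rewrite E P0 P1 P1' P2 /c expr_div_n => H.
rewrite -subr_ge0; move: H; set X := \sum_(i < n) _; set Y := \sum_(i in S) _.
set Z := \sum_(i in S) _.
have -> : s ^+ 2 / N ^+ 2 * X - 2 * (s / N) * Z + Y - - s1 =
   Y + s1 - s / N * Z - s / N * Z + s ^+ 2 / N ^+ 2 * X by ring.
by [].
Qed.
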